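(* Let $\mathcal A=(A,\delta^A,\sigma^A,\tau^A)$ and $\mathcal B=(B,\delta^B,\sigma^B,\tau^B)$ be fuzzy automata over $\mathcal L$ and $X$, let $w\in\{fs,bs,fb,bb,fbb,bfb\}$, and define $\{\varphi_k\}_{k\in\mathbb N}\subseteq\mathcal R(A,B)$ by $$\varphi_1=\psi^w,\qquad \varphi_{k+1}=\varphi_k\wedge\phi^w(\varphi_k)\quad(k\in\mathbb N).$$ Suppose the subalgebra $\big\langle \operatorname{im}(\psi^w)\cup\bigcup_{x\in X}(\operatorname{im}(\delta^A_x)\cup\operatorname{im}(\delta^B_x))\big\rangle$ of $\mathcal L$ is finite. Then: (a) the sequence $\{\varphi_k\}$ is finite (takes only finitely many values) and descending, and there is a least $k\in\mathbb N$ with $\varphi_k=\varphi_{k+1}$; (b) for this $k$, $\varphi_k$ is the greatest fuzzy relation in $\mathcal R(A,B)$ satisfying $(w\text{-}2)$ and $(w\text{-}3)$; (c) if $\varphi_k$ satisfies $(w\text{-}1)$, then it is the greatest fuzzy relation in $\mathcal R(A,B)$ satisfying $(w\text{-}1)$, $(w\text{-}2)$ and $(w\text{-}3)$; (d) if $\varphi_k$ does not satisfy $(w\text{-}1)$, then no fuzzy relation in $\mathcal R(A,B)$ satisfies $(w\text{-}1)$, $(w\text{-}2)$ and $(w\text{-}3)$.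
   Context: Let $\mathcal L=(L,\wedge,\vee,\otimes,\to,0,1)$ be a complete residuated lattice: $(L,\wedge,\vee,0,1)$ is a complete lattice with least element $0$ and greatest element $1$, $(L,\otimes,1)$ is a commutative monoid, and $x\otimes y\le z\iff x\le y\to z$. For nonempty sets $A,B$, $\mathcal R(A,B)$ denotes the set of fuzzy relations $A\times B\to L$, ordered pointwise, with pointwise meets $\wedge$ and joins; $L^A$ denotes functions $A\to L$. $\operatorname{im}(\varphi)$ is the set of values of $\varphi$; for $S\subseteq L$, $\langle S\rangle$ is the subalgebra of $\mathcal L$ (w.r.t. $\wedge,\vee,\otimes,\to,0,1$) generated by $S$. Converse: $\varphi^{-1}(b,a)=\varphi(a,b)$. Compositions: $(\varphi\circ\psi)(a,c)=\bigvee_{b}\varphi(a,b)\otimes\psi(b,c)$; for $f\in L^A$, $g\in L^B$, $\varphi\in\mathcal R(A,B)$: $(f\circ\varphi)(b)=\bigvee_{a}f(a)\otimes\varphi(a,b)$, $(\varphi\circ g)(a)=\bigvee_{b}\varphi(a,b)\otimes g(b)$. For $\eta\in L^A,\xi\in L^B$: $(\eta\to\xi)(a,b)=\eta(a)\to\xi(b)$, $(\eta\leftarrow\xi)(a,b)=\xi(b)\to\eta(a)$, $\eta\leftrightarrow\xi=(\eta\to\xi)\wedge(\eta\leftarrow\xi)$. $X$ is a finite nonempty alphabet. A fuzzy automaton $\mathcal A=(A,\delta^A,\sigma^A,\tau^A)$: finite nonempty state set $A$, $\delta^A:A\times X\times A\to L$, $\sigma^A,\tau^A\in L^A$; $\delta^A_x(a,a')=\delta^A(a,x,a')$.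 Similarly for $\mathcal B$. Conditions on $\varphi\in\mathcal R(A,B)$ (those with $x$ required for all $x\in X$): - $fs$: (1) $\sigma^A\le\sigma^B\circ\varphi^{-1}$; (2) $\varphi^{-1}\circ\delta^A_x\le\delta^B_x\circ\varphi^{-1}$; (3) $\varphi^{-1}\circ\tau^A\le\tau^B$. - $bs$: (1) $\tau^A\le\varphi\circ\tau^B$; (2) $\delta^A_x\circ\varphi\le\varphi\circ\delta^B_x$; (3) $\sigma^A\circ\varphi\le\sigma^B$. - $fb$: (1) $\sigma^A\le\sigma^B\circ\varphi^{-1}$, $\sigma^B\le\sigma^A\circ\varphi$; (2) $\varphi^{-1}\circ\delta^A_x\le\delta^B_x\circ\varphi^{-1}$, $\varphi\circ\delta^B_x\le\delta^A_x\circ\varphi$; (3) $\varphi^{-1}\circ\tau^A\le\tau^B$, $\varphi\circ\tau^B\le\tau^A$. - $bb$: (1) $\tau^A\le\varphi\circ\tau^B$, $\tau^B\le\varphi^{-1}\circ\tau^A$; (2) $\delta^A_x\circ\varphi\le\varphi\circ\delta^B_x$, $\delta^B_x\circ\varphi^{-1}\le\varphi^{-1}\circ\delta^A_x$; (3) $\sigma^A\circ\varphi\le\sigma^B$, $\sigma^B\circ\varphi^{-1}\le\sigma^A$. - $fbb$: (1) $\sigma^A\le\sigma^B\circ\varphi^{-1}$, $\tau^B\le\varphi^{-1}\circ\tau^A$; (2) $\varphi^{-1}\circ\delta^A_x=\delta^B_x\circ\varphi^{-1}$; (3) $\sigma^B\circ\varphi^{-1}\le\sigma^A$, $\varphi^{-1}\circ\tau^A\le\tau^B$.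 - $bfb$: (1) $\sigma^B\le\sigma^A\circ\varphi$, $\tau^A\le\varphi\circ\tau^B$; (2) $\delta^A_x\circ\varphi=\varphi\circ\delta^B_x$; (3) $\sigma^A\circ\varphi\le\sigma^B$, $\varphi\circ\tau^B\le\tau^A$. Here $(w\text{-}i)$ denotes condition $(i)$ of type $w$. $\psi^{fs}=\tau^A\to\tau^B$; $\psi^{bs}=\sigma^A\to\sigma^B$; $\psi^{fb}=\tau^A\leftrightarrow\tau^B$; $\psi^{bb}=\sigma^A\leftrightarrow\sigma^B$; $\psi^{fbb}=(\tau^A\to\tau^B)\wedge(\sigma^A\leftarrow\sigma^B)$; $\psi^{bfb}=(\sigma^A\to\sigma^B)\wedge(\tau^A\leftarrow\tau^B)$. For $\alpha\in\mathcal R(A,B)$: $F(\alpha)(a,b)=\bigwedge_{x\in X}\bigwedge_{a'\in A}\big[\delta^A_x(a,a')\to\bigvee_{b'\in B}\delta^B_x(b,b')\otimes\alpha(a',b')\big]$, $F'(\alpha)(a,b)=\bigwedge_{x\in X}\bigwedge_{b'\in B}\big[\delta^B_x(b,b')\to\bigvee_{a'\in A}\delta^A_x(a,a')\otimes\alpha(a',b')\big]$, $G(\alpha)(a,b)=\bigwedge_{x\in X}\bigwedge_{a'\in A}\big[\delta^A_x(a',a)\to\bigvee_{b'\in B}\alpha(a',b')\otimes\delta^B_x(b',b)\big]$, $G'(\alpha)(a,b)=\bigwedge_{x\in X}\bigwedge_{b'\in B}\big[\delta^B_x(b',b)\to\bigvee_{a'\in A}\delta^A_x(a',a)\otimes\alpha(a',b')\big]$;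 $\phi^{fs}=F$, $\phi^{bs}=G$, $\phi^{fb}=F\wedge F'$, $\phi^{bb}=G\wedge G'$, $\phi^{fbb}=F\wedge G'$, $\phi^{bfb}=G\wedge F'$. *)

(* Defs.v *)
From mathcomp Require Import all_boot.
Set Implicit Arguments. Unset Strict Implicit. Unset Printing Implicit Defensive.

Record CRL := {
  crl_car :> Type;
  le : crl_car -> crl_car -> Prop;
  sup : (crl_car -> Prop) -> crl_car;
  inf : (crl_car -> Prop) -> crl_car;
  tens : crl_car -> crl_car -> crl_car;
  res : crl_car -> crl_car -> crl_car;
  bot : crl_car;
  top : crl_car;
  le_refl : forall x, le x x;
  le_antisym : forall x y, le x y -> le y x -> x = y;
  le_trans : forall x y z, le x y -> le y z -> le x z;
  sup_ub : forall (P : crl_car -> Prop) x, P x -> le x (sup P);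
  sup_least : forall (P : crl_car -> Prop) y, (forall x, P x -> le x y) -> le (sup P) y;
  inf_lb : forall (P : crl_car -> Prop) x, P x -> le (inf P) x;
  inf_greatest : forall (P : crl_car -> Prop) y, (forall x, P x -> le y x) -> le y (inf P);
  bot_least : forall x, le bot x;
  top_greatest : forall x, le x top;
  tens_assoc : forall x y z, tens x (tens y z) = tens (tens x y) z;
  tens_comm : forall x y, tens x y = tens y x;
  tens_top : forall x, tens x top = x;
  residuation : forall x y z, le (tens x y) z <-> le x (res y z)
}.

Arguments le {c}. Arguments sup {c}. Arguments inf {c}. Arguments tens {c}.
Arguments res {c}. Arguments bot {c}. Arguments top {c}.

Section Lattice.
Variable L : CRL.

Definition lmeet (x y : L) : L := inf (fun z => z = x \/ z = y).
Definition ljoin (x y : L) : L := sup (fun z => z = x \/ z = y).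
Definition lbiimp (x y : L) : L := lmeet (res x y) (res y x).

Definition bjoin (I : Type) (f : I -> L) : L := sup (fun y => exists i, y = f i).
Definition bmeet (I : Type) (f : I -> L) : L := inf (fun y => exists i, y = f i).

Inductive gen (S : L -> Prop) : L -> Prop :=
| gen_base x : S x -> gen S x
| gen_bot : gen S bot
| gen_top : gen S top
| gen_meet x y : gen S x -> gen S y -> gen S (lmeet x y)
| gen_join x y : gen S x -> gen S y -> gen S (ljoin x y)
| gen_tens x y : gen S x -> gen S y -> gen S (tens x y)
| gen_res x y : gen S x -> gen S y -> gen S (res x y).
End Lattice.

Definition finite_set (T : Type) (P : T -> Prop) : Prop :=
  exists (n : nat) (f : nat -> T), forall x, P x -> exists i, i < n /\ x = f i.

Record FA (L : CRL) (X : finType) := {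
  st : finType;
  st_nonempty : 0 < #|st|;
  delta : X -> st -> st -> L;
  sigma : st -> L;
  tau : st -> L
}.
Arguments st {L X} f. Arguments delta {L X} f _ _ _.
Arguments sigma {L X} f _. Arguments tau {L X} f _.

Section Relations.
Variable L : CRL.

Definition frel (A B : Type) := A -> B -> L.

Definition rle (A B : Type) (p q : frel A B) : Prop := forall a b, le (p a b) (q a b).
Definition vle (A : Type) (f g : A -> L) : Prop := forall a, le (f a) (g a).
Definition rmeet (A B : Type) (p q : frel A B) : frel A B := fun a b => lmeet (p a b) (q a b).
Definition conv (A B : Type) (p : frel A B) : frel B A := fun b a => p a b.
Definition rcomp (A B C : Type) (p : frel A B) (q : frel B C) : frel A C :=
  fun a c => bjoin (fun b : B => tens (p a b) (q b c)).
Definition vrcomp (A B : Type) (f : A -> L) (p : frel A B) : B -> L :=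
  fun b => bjoin (fun a : A => tens (f a) (p a b)).
Definition rvcomp (A B : Type) (p : frel A B) (g : B -> L) : A -> L :=
  fun a => bjoin (fun b : B => tens (p a b) (g b)).
End Relations.

Inductive wtype := fs | bs | fb | bb | fbb | bfb.

Section Simulations.
Variables (L : CRL) (X : finType) (A B : FA L X).

Local Notation SA := (st A). Local Notation SB := (st B).
Local Notation delA := (delta A). Local Notation delB := (delta B).
Local Notation sigA := (sigma A). Local Notation sigB := (sigma B).
Local Notation tauA := (tau A). Local Notation tauB := (tau B).

Definition cond1 (w : wtype) (p : frel L SA SB) : Prop :=
  match w with
  | fs => vle sigA (vrcomp sigB (conv p))
  | bs => vle tauA (rvcomp p tauB)
  | fb => vle sigA (vrcomp sigB (conv p)) /\ vle sigB (vrcomp sigA p)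
  | bb => vle tauA (rvcomp p tauB) /\ vle tauB (rvcomp (conv p) tauA)
  | fbb => vle sigA (vrcomp sigB (conv p)) /\ vle tauB (rvcomp (conv p) tauA)
  | bfb => vle sigB (vrcomp sigA p) /\ vle tauA (rvcomp p tauB)
  end.

Definition cond2 (w : wtype) (p : frel L SA SB) : Prop :=
  forall x : X,
  match w with
  | fs => rle (rcomp (conv p) (delA x)) (rcomp (delB x) (conv p))
  | bs => rle (rcomp (delA x) p) (rcomp p (delB x))
  | fb => rle (rcomp (conv p) (delA x)) (rcomp (delB x) (conv p))
          /\ rle (rcomp p (delB x)) (rcomp (delA x) p)
  | bb => rle (rcomp (delA x) p) (rcomp p (delB x))
          /\ rle (rcomp (delB x) (conv p)) (rcomp (conv p) (delA x))
  | fbb => rcomp (conv p) (delA x) = rcomp (delB x) (conv p)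
  | bfb => rcomp (delA x) p = rcomp p (delB x)
  end.

Definition cond3 (w : wtype) (p : frel L SA SB) : Prop :=
  match w with
  | fs => vle (rvcomp (conv p) tauA) tauB
  | bs => vle (vrcomp sigA p) sigB
  | fb => vle (rvcomp (conv p) tauA) tauB /\ vle (rvcomp p tauB) tauA
  | bb => vle (vrcomp sigA p) sigB /\ vle (vrcomp sigB (conv p)) sigA
  | fbb => vle (vrcomp sigB (conv p)) sigA /\ vle (rvcomp (conv p) tauA) tauB
  | bfb => vle (vrcomp sigA p) sigB /\ vle (rvcomp p tauB) tauA
  end.

Definition psi (w : wtype) : frel L SA SB :=
  match w with
  | fs => fun a b => res (tauA a) (tauB b)
  | bs => fun a b => res (sigA a) (sigB b)
  | fb => fun a b => lbiimp (tauA a) (tauB b)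
  | bb => fun a b => lbiimp (sigA a) (sigB b)
  | fbb => fun a b => lmeet (res (tauA a) (tauB b)) (res (sigB b) (sigA a))
  | bfb => fun a b => lmeet (res (sigA a) (sigB b)) (res (tauB b) (tauA a))
  end.

Definition opF (al : frel L SA SB) : frel L SA SB := fun a b =>
  bmeet (fun x : X => bmeet (fun a' : SA =>
    res (delA x a a') (bjoin (fun b' : SB => tens (delB x b b') (al a' b'))))).
Definition opF' (al : frel L SA SB) : frel L SA SB := fun a b =>
  bmeet (fun x : X => bmeet (fun b' : SB =>
    res (delB x b b') (bjoin (fun a' : SA => tens (delA x a a') (al a' b'))))).
Definition opG (al : frel L SA SB) : frel L SA SB := fun a b =>
  bmeet (fun x : X => bmeet (fun a' : SA =>
    res (delA x a' a) (bjoin (fun b' : SB => tens (al a' b') (delB x b' b))))).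
Definition opG' (al : frel L SA SB) : frel L SA SB := fun a b =>
  bmeet (fun x : X => bmeet (fun b' : SB =>
    res (delB x b' b) (bjoin (fun a' : SA => tens (delA x a' a) (al a' b'))))).

Definition phiop (w : wtype) (al : frel L SA SB) : frel L SA SB :=
  match w with
  | fs => opF al
  | bs => opG al
  | fb => rmeet (opF al) (opF' al)
  | bb => rmeet (opG al) (opG' al)
  | fbb => rmeet (opF al) (opG' al)
  | bfb => rmeet (opG al) (opF' al)
  end.

(** The sequence, indexed from 1 as in the paper:
    phis w 1 = psi^w, phis w (k+1) = phis w k /\ phi^w (phis w k) for k >= 1.
    (phis w 0 is an irrelevant junk value, also equal to psi^w.) *)
Definition phis (w : wtype) (k : nat) : frel L SA SB :=
  iter k.-1 (fun p => rmeet p (phiop w p)) (psi w).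

Definition gens (w : wtype) (y : L) : Prop :=
  (exists a b, y = psi w a b)
  \/ (exists x a a', y = delA x a a')
  \/ (exists x b b', y = delB x b b').

End Simulations.

Arguments cond1 {L X} A B w p. Arguments cond2 {L X} A B w p.
Arguments cond3 {L X} A B w p. Arguments psi {L X} A B w _ _.
Arguments opF {L X} A B al _ _. Arguments opF' {L X} A B al _ _.
Arguments opG {L X} A B al _ _. Arguments opG' {L X} A B al _ _.
Arguments phiop {L X} A B w al _ _. Arguments phis {L X} A B w k _ _.
Arguments gens {L X} A B w y.

(* Main.v *)
Require Import Defs.
From mathcomp Require Import all_boot.
From Stdlib Require Import Classical ClassicalEpsilon FunctionalExtensionality.
Set Implicit Arguments. Unset Strict Implicit.

Section Lat.
Variable L : CRL.
Implicit Types x y z : L.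

Lemma lmeet_l x y : le (lmeet x y) x.
Proof. apply: inf_lb; by left. Qed.
Lemma lmeet_r x y : le (lmeet x y) y.
Proof. apply: inf_lb; by right. Qed.
Lemma lmeet_glb z x y : le z x -> le z y -> le z (lmeet x y).
Proof. move=> h1 h2; apply: inf_greatest => u [->|->] //. Qed.
Lemma lmeet_iff z x y : le z (lmeet x y) <-> le z x /\ le z y.
Proof.
split; first by move=> h; split; apply: le_trans h _; [apply: lmeet_l|apply: lmeet_r].
by case=> h1 h2; apply: lmeet_glb.
Qed.
Lemma lmeet_mono x y x' y' : le x x' -> le y y' -> le (lmeet x y) (lmeet x' y').
Proof.
move=> h1 h2; apply: lmeet_glb; [apply: le_trans h1; apply: lmeet_l|apply: le_trans h2; apply: lmeet_r].
Qed.

Lemma bjoin_ub (I : Type) (f : I -> L) i : le (f i) (bjoin f).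
Proof. apply: sup_ub; by exists i. Qed.
Lemma bjoin_least (I : Type) (f : I -> L) y : (forall i, le (f i) y) -> le (bjoin f) y.
Proof. move=> h; apply: sup_least => u [i ->]; exact: h. Qed.
Lemma bjoin_iff (I : Type) (f : I -> L) y : le (bjoin f) y <-> forall i, le (f i) y.
Proof.
split; last exact: bjoin_least.
move=> h i; apply: le_trans h; exact: bjoin_ub.
Qed.
Lemma bmeet_lb (I : Type) (f : I -> L) i : le (bmeet f) (f i).
Proof. apply: inf_lb; by exists i. Qed.
Lemma bmeet_glb (I : Type) (f : I -> L) y : (forall i, le y (f i)) -> le y (bmeet f).
Proof. move=> h; apply: inf_greatest => u [i ->]; exact: h. Qed.
Lemma bmeet_iff (I : Type) (f : I -> L) y : le y (bmeet f) <-> forall i, le y (f i).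
Proof.
split; last exact: bmeet_glb.
move=> h i; apply: le_trans h _; exact: bmeet_lb.
Qed.
Lemma bjoin_mono (I : Type) (f g : I -> L) : (forall i, le (f i) (g i)) -> le (bjoin f) (bjoin g).
Proof. move=> h; apply: bjoin_least => i; apply: le_trans (h i) _; exact: bjoin_ub. Qed.
Lemma bmeet_mono (I : Type) (f g : I -> L) : (forall i, le (f i) (g i)) -> le (bmeet f) (bmeet g).
Proof. move=> h; apply: bmeet_glb => i; apply: le_trans (h i); exact: bmeet_lb. Qed.

Lemma tens_mono_l x y z : le x y -> le (tens x z) (tens y z).
Proof.
move=> h; apply/residuation; apply: le_trans h _; apply/residuation; exact: le_refl.
Qed.
Lemma tens_mono_r x y z : le x y -> le (tens z x) (tens z y).
Proof. move=> h; rewrite (tens_comm z x) (tens_comm z y); exact: tens_mono_l. Qed.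
Lemma res_mono_r x y z : le y z -> le (res x y) (res x z).
Proof.
move=> h; apply/residuation; apply: le_trans h; apply/residuation; exact: le_refl.
Qed.
Lemma res_iff x y z : le x (res y z) <-> le (tens x y) z.
Proof. by rewrite residuation. Qed.
Lemma res_iff' x y z : le x (res y z) <-> le (tens y x) z.
Proof. by rewrite tens_comm residuation. Qed.

Section GenFin.
Variables (S : L -> Prop) (T : finType) (f : T -> L).
Hypothesis hf : forall i, gen S (f i).

Fixpoint fm (s : seq T) : L := if s is i :: s' then lmeet (f i) (fm s') else top.
Fixpoint fj (s : seq T) : L := if s is i :: s' then ljoin (f i) (fj s') else bot.

Lemma fm_lb s i : i \in s -> le (fm s) (f i).
Proof.
elim: s => // a s IH; rewrite in_cons => /orP [/eqP ->|h] /=; first exact: lmeet_l.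
apply: le_trans (IH h); exact: lmeet_r.
Qed.
Lemma fm_glb s y : (forall i, i \in s -> le y (f i)) -> le y (fm s).
Proof.
elim: s => [|a s IH] h /=; first exact: top_greatest.
apply: lmeet_glb; first by apply: h; rewrite in_cons eqxx.
apply: IH => i hi; apply: h; by rewrite in_cons hi orbT.
Qed.
Lemma fj_ub s i : i \in s -> le (f i) (fj s).
Proof.
elim: s => // a s IH; rewrite in_cons => /orP [/eqP ->|h] /=; first by apply: sup_ub; left.
apply: le_trans (IH h) _; by apply: sup_ub; right.
Qed.
Lemma fj_least s y : (forall i, i \in s -> le (f i) y) -> le (fj s) y.
Proof.
elim: s => [|a s IH] h /=; first exact: bot_least.
apply: sup_least => u [->|->]; first by apply: h; rewrite in_cons eqxx.
apply: IH => i hi; apply: h; by rewrite in_cons hi orbT.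
Qed.
Lemma gen_fm s : gen S (fm s).
Proof. elim: s => [|a s IH] /=; [exact: gen_top | exact: gen_meet]. Qed.
Lemma gen_fj s : gen S (fj s).
Proof. elim: s => [|a s IH] /=; [exact: gen_bot | exact: gen_join]. Qed.

Lemma gen_bmeet : gen S (bmeet f).
Proof.
have -> : bmeet f = fm (enum T); last exact: gen_fm.
apply: le_antisym.
  apply: fm_glb => i _; exact: bmeet_lb.
apply: bmeet_glb => i; apply: fm_lb; by rewrite mem_enum.
Qed.
Lemma gen_bjoin : gen S (bjoin f).
Proof.
have -> : bjoin f = fj (enum T); last exact: gen_fj.
apply: le_antisym.
  apply: bjoin_least => i; apply: fj_ub; by rewrite mem_enum.
apply: fj_least => i _; exact: bjoin_ub.
Qed.
End GenFin.
End Lat.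

Section Auto.
Variables (L : CRL) (X : finType) (A B : FA L X).
Local Notation SA := (st A). Local Notation SB := (st B).
Local Notation R := (Defs.frel L SA SB).

Lemma rle_eq (T U : Type) (p q : Defs.frel L T U) : rle p q -> rle q p -> p = q.
Proof.
move=> h1 h2; apply: functional_extensionality => a; apply: functional_extensionality => b.
exact: le_antisym.
Qed.
Lemma rle_refl (T U : Type) (p : Defs.frel L T U) : rle p p.
Proof. move=> a b; exact: le_refl. Qed.
Lemma rle_trans (T U : Type) (p q r : Defs.frel L T U) : rle p q -> rle q r -> rle p r.
Proof. move=> h1 h2 a b; exact: le_trans (h1 a b) (h2 a b). Qed.
Lemma rle_meetf (T U : Type) (p q r : Defs.frel L T U) :
  rle p (fun a b => lmeet (q a b) (r a b)) <-> rle p q /\ rle p r.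
Proof.
split; first by move=> h; split=> a b; have /lmeet_iff [] := h a b.
by case=> h1 h2 a b; apply/lmeet_iff.
Qed.

Lemma opF_iff (al : R) : rle al (opF A B al) <->
  forall x, rle (rcomp (conv al) (delta A x)) (rcomp (delta B x) (conv al)).
Proof.
split.
  move=> h x b a'; apply: bjoin_least => a; apply/res_iff.
  apply: le_trans (h a b) _; apply: le_trans (bmeet_lb _ x) _; exact: (bmeet_lb _ a').
move=> h a b; apply: bmeet_glb => x; apply: bmeet_glb => a'; apply/res_iff.
apply: le_trans (h x b a').
exact: (bjoin_ub (fun a0 => tens (al a0 b) (delta A x a0 a')) a).
Qed.

Lemma opF'_iff (al : R) : rle al (opF' A B al) <->
  forall x, rle (rcomp al (delta B x)) (rcomp (delta A x) al).
Proof.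
split.
  move=> h x a b'; apply: bjoin_least => b; apply/res_iff.
  apply: le_trans (h a b) _; apply: le_trans (bmeet_lb _ x) _; exact: (bmeet_lb _ b').
move=> h a b; apply: bmeet_glb => x; apply: bmeet_glb => b'; apply/res_iff.
apply: le_trans (h x a b').
exact: (bjoin_ub (fun b0 => tens (al a b0) (delta B x b0 b')) b).
Qed.

Lemma opG_iff (al : R) : rle al (opG A B al) <->
  forall x, rle (rcomp (delta A x) al) (rcomp al (delta B x)).
Proof.
split.
  move=> h x a' b; apply: bjoin_least => a; apply/res_iff'.
  apply: le_trans (h a b) _; apply: le_trans (bmeet_lb _ x) _; exact: (bmeet_lb _ a').
move=> h a b; apply: bmeet_glb => x; apply: bmeet_glb => a'; apply/res_iff'.
apply: le_trans (h x a' b).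
exact: (bjoin_ub (fun a0 => tens (delta A x a' a0) (al a0 b)) a).
Qed.

Lemma opG'_iff (al : R) : rle al (opG' A B al) <->
  forall x, rle (rcomp (delta B x) (conv al)) (rcomp (conv al) (delta A x)).
Proof.
have E : forall x b' a, rcomp (conv al) (delta A x) b' a =
   bjoin (fun a' => tens (delta A x a' a) (al a' b')).
  move=> x b' a; rewrite /rcomp /conv; congr bjoin.
  apply: functional_extensionality => a'; exact: tens_comm.
split.
  move=> h x b' a; rewrite E; apply: bjoin_least => b; apply/res_iff'.
  apply: le_trans (h a b) _; apply: le_trans (bmeet_lb _ x) _; exact: (bmeet_lb _ b').
move=> h a b; apply: bmeet_glb => x; apply: bmeet_glb => b'; apply/res_iff'.
rewrite -E; apply: le_trans (h x b' a).
exact: (bjoin_ub (fun b0 => tens (delta B x b' b0) (al a b0)) b).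
Qed.

Lemma cond2_iff w (al : R) : cond2 A B w al <-> rle al (phiop A B w al).
Proof.
case: w; rewrite /cond2 /phiop /rmeet ?rle_meetf.
- by rewrite opF_iff.
- by rewrite opG_iff.
- rewrite opF_iff opF'_iff; split; first by move=> h; split=> x; case: (h x).
  by case=> h1 h2 x.
- rewrite opG_iff opG'_iff; split; first by move=> h; split=> x; case: (h x).
  by case=> h1 h2 x.
- rewrite opF_iff opG'_iff; split.
    by move=> h; split=> x; rewrite h; apply: rle_refl.
  by case=> h1 h2 x; apply: rle_eq.
- rewrite opG_iff opF'_iff; split.
    by move=> h; split=> x; rewrite h; apply: rle_refl.
  by case=> h1 h2 x; apply: rle_eq.
Qed.

Lemma V1 (p : R) t s : vle (rvcomp (conv p) t) s <-> rle p (fun a b => res (t a) (s b)).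
Proof.
split.
  move=> h a b; apply/res_iff; apply: le_trans (h b).
  exact: (bjoin_ub (fun a0 => tens (p a0 b) (t a0)) a).
move=> h b; apply: bjoin_least => a; apply/res_iff; exact: h.
Qed.
Lemma V2 (p : R) t s : vle (vrcomp t p) s <-> rle p (fun a b => res (t a) (s b)).
Proof.
split.
  move=> h a b; apply/res_iff'; apply: le_trans (h b).
  exact: (bjoin_ub (fun a0 => tens (t a0) (p a0 b)) a).
move=> h b; apply: bjoin_least => a; apply/res_iff'; exact: h.
Qed.
Lemma V3 (p : R) t s : vle (rvcomp p t) s <-> rle p (fun a b => res (t b) (s a)).
Proof.
split.
  move=> h a b; apply/res_iff; apply: le_trans (h a).
  exact: (bjoin_ub (fun b0 => tens (p a b0) (t b0)) b).
move=> h a; apply: bjoin_least => b; apply/res_iff; exact: h.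
Qed.
Lemma V4 (p : R) t s : vle (vrcomp t (conv p)) s <-> rle p (fun a b => res (t b) (s a)).
Proof.
split.
  move=> h a b; apply/res_iff'; apply: le_trans (h a).
  exact: (bjoin_ub (fun b0 => tens (t b0) (p a b0)) b).
move=> h a; apply: bjoin_least => b; apply/res_iff'; exact: h.
Qed.

Lemma cond3_iff w (p : R) : cond3 A B w p <-> rle p (psi A B w).
Proof.
case: w; rewrite /cond3 /psi /lbiimp ?rle_meetf.
- exact: V1.
- exact: V2.
- by rewrite V1 V3.
- by rewrite V2 V4.
- rewrite V1 V4; tauto.
- by rewrite V2 V3.
Qed.

Lemma cond1_mono w (p q : R) : rle p q -> cond1 A B w p -> cond1 A B w q.
Proof.
move=> hpq.
have m1 : forall t, vle (vrcomp t (conv p)) (vrcomp t (conv q)).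
  move=> t b; apply: bjoin_mono => a; apply: tens_mono_r; exact: hpq.
have m2 : forall t, vle (vrcomp t p) (vrcomp t q).
  move=> t b; apply: bjoin_mono => a; apply: tens_mono_r; exact: hpq.
have m3 : forall t, vle (rvcomp p t) (rvcomp q t).
  move=> t b; apply: bjoin_mono => a; apply: tens_mono_l; exact: hpq.
have m4 : forall t, vle (rvcomp (conv p) t) (rvcomp (conv q) t).
  move=> t b; apply: bjoin_mono => a; apply: tens_mono_l; exact: hpq.
have T : forall (T : Type) (f g h : T -> L), vle f g -> vle g h -> vle f h.
  move=> T f g h h1 h2 a; exact: le_trans (h1 a) (h2 a).
case: w => /=; try case; move=> *; (try split); apply: T; eauto.
Qed.

Lemma phiop_mono w (p q : R) : rle p q -> rle (phiop A B w p) (phiop A B w q).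
Proof.
move=> h.
have mF : rle (opF A B p) (opF A B q).
  move=> a b; do 2 (apply: bmeet_mono => ?); apply: res_mono_r; apply: bjoin_mono => ?.
  apply: tens_mono_r; exact: h.
have mF' : rle (opF' A B p) (opF' A B q).
  move=> a b; do 2 (apply: bmeet_mono => ?); apply: res_mono_r; apply: bjoin_mono => ?.
  apply: tens_mono_r; exact: h.
have mG : rle (opG A B p) (opG A B q).
  move=> a b; do 2 (apply: bmeet_mono => ?); apply: res_mono_r; apply: bjoin_mono => ?.
  apply: tens_mono_l; exact: h.
have mG' : rle (opG' A B p) (opG' A B q).
  move=> a b; do 2 (apply: bmeet_mono => ?); apply: res_mono_r; apply: bjoin_mono => ?.
  apply: tens_mono_r; exact: h.
case: w => //= a b; apply: lmeet_mono; eauto.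
Qed.

Lemma phiop_gen w (p : R) (S : L -> Prop) :
  (forall x a a', gen S (delta A x a a')) -> (forall x b b', gen S (delta B x b b')) ->
  (forall a b, gen S (p a b)) -> forall a b, gen S (phiop A B w p a b).
Proof.
move=> hA hB hp.
have gF : forall a b, gen S (opF A B p a b).
  move=> a b; do 2 (apply: gen_bmeet => ?); apply: gen_res => //; apply: gen_bjoin => ?.
  exact: gen_tens.
have gF' : forall a b, gen S (opF' A B p a b).
  move=> a b; do 2 (apply: gen_bmeet => ?); apply: gen_res => //; apply: gen_bjoin => ?.
  exact: gen_tens.
have gG : forall a b, gen S (opG A B p a b).
  move=> a b; do 2 (apply: gen_bmeet => ?); apply: gen_res => //; apply: gen_bjoin => ?.
  exact: gen_tens.
have gG' : forall a b, gen S (opG' A B p a b).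
  move=> a b; do 2 (apply: gen_bmeet => ?); apply: gen_res => //; apply: gen_bjoin => ?.
  exact: gen_tens.
case: w => //= a b; apply: gen_meet; eauto.
Qed.

End Auto.

Definition pb (P : Prop) : bool := if excluded_middle_informative P then true else false.
Lemma pbP (P : Prop) : pb P = true <-> P.
Proof. rewrite /pb; case: excluded_middle_informative => //. Qed.

Lemma sum_lt (T : finType) (F G : T -> nat) j :
  (forall i, F i <= G i) -> F j < G j -> \sum_i F i < \sum_i G i.
Proof.
move=> h hj; rewrite (bigD1 j) //= [X in _ < X](bigD1 j) //= -addSn.
apply: leq_add => //; apply: leq_sum => i _; exact: h.
Qed.

Section Main.
Variables (L : CRL) (X : finType) (A B : FA L X) (w : wtype).
Local Notation SA := (st A). Local Notation SB := (st B).
Local Notation R := (Defs.frel L SA SB).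

Definition Fw (p : R) : R := rmeet p (phiop A B w p).

Lemma phisS k : 0 < k -> phis A B w k.+1 = Fw (phis A B w k).
Proof. by case: k. Qed.

Lemma iter_le_psi n : rle (iter n Fw (psi A B w)) (psi A B w).
Proof.
elim: n => [|n IH] /=; first exact: rle_refl.
apply: rle_trans IH; move=> a b; exact: lmeet_l.
Qed.
Lemma phis_le_psi k : rle (phis A B w k) (psi A B w).
Proof. exact: iter_le_psi. Qed.

Lemma phis_desc k : 0 < k -> rle (phis A B w k.+1) (phis A B w k).
Proof. move=> hk; rewrite phisS // => a b; exact: lmeet_l. Qed.

Lemma phis_greatest (p : R) : cond2 A B w p -> cond3 A B w p -> forall k, rle p (phis A B w k).
Proof.
move=> /cond2_iff h2 /cond3_iff h3 k; rewrite /phis; elim: k.-1 => [|n IH] //=.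
move=> a b; apply: lmeet_glb; first exact: IH.
apply: le_trans (h2 a b) _; exact: phiop_mono IH a b.
Qed.

Lemma phis_gen k a b : gen (gens A B w) (phis A B w k a b).
Proof.
rewrite /phis; elim: k.-1 a b => [|n IH] a b /=.
  by apply: gen_base; left; exists a, b.
apply: gen_meet; first exact: IH.
apply: phiop_gen => //.
  by move=> x a1 a2; apply: gen_base; right; left; exists x, a1, a2.
by move=> x b1 b2; apply: gen_base; right; right; exists x, b1, b2.
Qed.

Section Measure.
Variables (n : nat) (f : nat -> L).
Hypothesis hG : forall x, gen (gens A B w) x -> exists i, i < n /\ x = f i.

Definition hgt (x : L) : nat := \sum_(i < n) (pb (le (f i) x) : nat).
Definition meas (p : R) : nat := \sum_(a : SA) \sum_(b : SB) hgt (p a b).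

Lemma hgt_mono x y : le y x -> hgt y <= hgt x.
Proof.
move=> h; apply: leq_sum => i _.
case E: (pb (le (f i) y)) => //=.
move/pbP: E => E; have : le (f i) x by exact: le_trans E h.
by move/pbP => ->.
Qed.

Lemma hgt_strict x y : le y x -> y <> x -> gen (gens A B w) x -> hgt y < hgt x.
Proof.
move=> h hne /hG [j [hj ex]].
apply: (@sum_lt _ _ _ (Ordinal hj)).
  move=> i; case E: (pb (le (f i) y)) => //=.
  move/pbP: E => E; have : le (f i) x by exact: le_trans E h.
  by move/pbP => ->.
have -> : pb (le (f (Ordinal hj)) x) = true by apply/pbP; rewrite ex /=; exact: le_refl.
case E: (pb (le (f (Ordinal hj)) y)) => //.
move/pbP: E => /= E; exfalso; apply: hne; apply: le_antisym => //; by rewrite ex.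
Qed.

Lemma meas_strict k : 0 < k -> phis A B w k <> phis A B w k.+1 ->
  meas (phis A B w k.+1) < meas (phis A B w k).
Proof.
move=> hk hne.
have [a [b hab]] : exists a b, phis A B w k.+1 a b <> phis A B w k a b.
  apply: NNPP => hn; apply: hne; apply: functional_extensionality => a.
  apply: functional_extensionality => b; apply: NNPP => hn2; apply: hn.
  by exists a, b => e; apply: hn2.
have hd := phis_desc hk.
apply: (@sum_lt _ _ _ a).
  move=> a'; apply: leq_sum => b' _; apply: hgt_mono; exact: hd.
apply: (@sum_lt _ _ _ b).
  move=> b'; apply: hgt_mono; exact: hd.
apply: hgt_strict; [exact: hd | exact: hab | exact: phis_gen].
Qed.

Lemma exists_stable : exists k, 0 < k /\ phis A B w k = phis A B w k.+1.
Proof.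
apply: NNPP => hn.
have st : forall j, meas (phis A B w j.+1) + j <= meas (phis A B w 1).
  elim=> [|j IH]; first by rewrite addn0.
  apply: leq_trans IH; rewrite addnS -addSn leq_add2r.
  apply: meas_strict => // e; apply: hn; by exists j.+1.
have := st (meas (phis A B w 1)).+1.
by rewrite addnS ltnNge leq_addl.
Qed.
End Measure.

End Main.

Theorem theorem5p3 (L : CRL) (X : finType) (hX : 0 < #|X|)
    (A B : FA L X) (w : wtype)
    (hfin : finite_set (gen (gens A B w))) :
  (* (a) the sequence is finite and descending *)
  finite_set (fun p => exists k, 0 < k /\ p = phis A B w k) /\
  (forall k, 0 < k -> rle (phis A B w k.+1) (phis A B w k)) /\
  (* (a) least k with phi_k = phi_{k+1} *)
  exists k, 0 < k /\ phis A B w k = phis A B w k.+1 /\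
    (forall j, 0 < j -> phis A B w j = phis A B w j.+1 -> k <= j) /\
    (* (b) *)
    (cond2 A B w (phis A B w k) /\ cond3 A B w (phis A B w k) /\
     forall p, cond2 A B w p -> cond3 A B w p -> rle p (phis A B w k)) /\
    (* (c) *)
    (cond1 A B w (phis A B w k) ->
       cond1 A B w (phis A B w k) /\ cond2 A B w (phis A B w k) /\
       cond3 A B w (phis A B w k) /\
       forall p, cond1 A B w p -> cond2 A B w p -> cond3 A B w p ->
         rle p (phis A B w k)) /\
    (* (d) *)
    (~ cond1 A B w (phis A B w k) ->
       forall p, ~ (cond1 A B w p /\ cond2 A B w p /\ cond3 A B w p)).
Proof.
case: hfin => n [f hG].
have exP : exists k, (0 < k) && pb (phis A B w k = phis A B w k.+1).
  have [k [hk ek]] := exists_stable hG.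
  by exists k; rewrite hk; apply/pbP.
case: (ex_minnP exP) => K /andP [hK /pbP eK] hmin.
have stab : forall j, K <= j -> phis A B w j = phis A B w K.
  elim=> [|j IH]; first by rewrite leqn0 => /eqP ->.
  rewrite leq_eqVlt => /orP [/eqP <- //|hj].
  rewrite phisS; last exact: leq_trans hK hj.
  by rewrite IH // -phisS.
have c2 : cond2 A B w (phis A B w K).
  apply/cond2_iff => a b; rewrite {1}eK phisS //; exact: lmeet_r.
have c3 : cond3 A B w (phis A B w K) by apply/cond3_iff; exact: phis_le_psi.
have gr : forall p, cond2 A B w p -> cond3 A B w p -> rle p (phis A B w K).
  move=> p h2 h3; exact: phis_greatest.
split.
  exists K.+1, (fun i => phis A B w i) => p [k [hk ->]].
  case: (leqP k K) => hkK; first by exists k.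
  by exists K; split => //; apply: stab; apply: ltnW.
split; first exact: phis_desc.
exists K; split => //; split => //; split.
  move=> j hj ej; apply: hmin; rewrite hj; by apply/pbP.
split; first by [].
split; first by move=> h1; split=> //; split=> //; split=> // p h1' h2 h3; exact: gr.
move=> hn p [h1 [h2 h3]]; apply: hn; apply: cond1_mono h1; exact: gr.
Qed.
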